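(* Let $R$ be a ring with identity, ${}_RM$ a finitely generated semisimple left $R$-module and $\varphi:M\to M$ a nilpotent $R$-endomorphism. Then the centralizer $C_\varphi=\{\psi\in\mathrm{Hom}_R(M,M)\mid\psi\circ\varphi=\varphi\circ\psi\}$, as a $Z(R)$-submodule of $\mathrm{Hom}_R(M,M)$, is a homomorphic image (as $Z(R)$-modules) of some $Z(R)$-submodule of a certain left $R$-submodule of $M_{m\times m}(R[t])$ generated by $md$ elements, where $d=\dim_R(M)$ and $m=\dim_R(\ker(\varphi))$.
   Context: $Z(R)$ is the centre of $R$, $R[t]$ the polynomial ring in a commuting indeterminate $t$, and $\dim_R$ denotes composition length. *)

(* Defs.v *)
From HB Require Import structures.
From mathcomp Require Import all_boot all_order all_algebra.
Set Implicit Arguments. Unset Strict Implicit. Unset Printing Implicit Defensive.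
Import GRing.Theory.
Local Open Scope ring_scope.

Definition Rlinear (R : nzRingType) (M N : lmodType R) (f : M -> N) : Prop :=
  forall (r : R) (x y : M), f (r *: x + y) = r *: f x + f y.

Definition submod (R : nzRingType) (M : lmodType R) (P : M -> Prop) : Prop :=
  [/\ P 0, (forall x y, P x -> P y -> P (x + y)) & (forall (r : R) x, P x -> P (r *: x))].

Definition fin_gen (R : nzRingType) (M : lmodType R) : Prop :=
  exists s : seq M, forall x : M, exists r : nat -> R,
    x = \sum_(i < size s) r i *: s`_i.

Definition semisimple (R : nzRingType) (M : lmodType R) : Prop :=
  forall N : M -> Prop, submod N ->
    exists N' : M -> Prop, [/\ submod N',
      (forall x, N x -> N' x -> x = 0) &
      (forall x, exists a b, [/\ N a, N' b & x = a + b])].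

Definition comp_length (R : nzRingType) (M : lmodType R) (P : M -> Prop) (n : nat)
  : Prop :=
  exists N : nat -> M -> Prop,
    [/\ forall i, submod (N i),
        (forall x, N 0%N x <-> x = 0),
        (forall x, N n x <-> P x) &
        forall i, (i < n)%N ->
          [/\ (forall x, N i x -> N i.+1 x),
              (exists x, N i.+1 x /\ ~ N i x) &
              forall Q : M -> Prop, submod Q ->
                (forall x, N i x -> Q x) -> (forall x, Q x -> N i.+1 x) ->
                (forall x, Q x <-> N i x) \/ (forall x, Q x <-> N i.+1 x)]].

Definition central (R : nzRingType) (z : R) : Prop := forall x : R, z * x = x * z.

Definition nilpotent_map (R : nzRingType) (M : lmodType R) (f : M -> M) : Prop :=
  exists k : nat, forall x, iter k f x = 0.

Definition centralizer (R : nzRingType) (M : lmodType R) (phi : M -> M)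
  (psi : M -> M) : Prop :=
  Rlinear psi /\ (forall x, psi (phi x) = phi (psi x)).

Definition matscale (R : nzRingType) (m : nat) (r : R) (A : 'M[{poly R}]_m)
  : 'M[{poly R}]_m := r%:P *: A.

Definition Rspan (R : nzRingType) (m k : nat) (g : 'I_k -> 'M[{poly R}]_m)
  (A : 'M[{poly R}]_m) : Prop :=
  exists c : 'I_k -> R, A = \sum_(i < k) matscale (c i) (g i).

Definition Zsubmod (R : nzRingType) (m : nat) (P : 'M[{poly R}]_m -> Prop) : Prop :=
  [/\ P 0, (forall A B, P A -> P B -> P (A + B)) &
      (forall z A, central z -> P A -> P (matscale z A))].

(* Main.v *)
Require Import Defs.
From HB Require Import structures.
From mathcomp Require Import all_boot all_order all_algebra.
From Stdlib Require Import ClassicalEpsilon Classical FunctionalExtensionality.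
From mathcomp Require Import zify.
Import GRing.Theory.
Local Open Scope ring_scope.
Set Implicit Arguments. Unset Strict Implicit.

Lemma lin0 (R : nzRingType) (M : lmodType R) (f : M -> M) : Rlinear f -> f 0 = 0.
Proof. move=> H; have := H 1 0 0; rewrite !scale1r addr0 => E.
by have := congr1 (fun v => v - f 0) E; rewrite /= subrr addrK. Qed.
Lemma linD (R : nzRingType) (M : lmodType R) (f : M -> M) : Rlinear f -> forall x y, f (x + y) = f x + f y.
Proof. by move=> H x y; have := H 1 x y; rewrite !scale1r. Qed.
Lemma linZ (R : nzRingType) (M : lmodType R) (f : M -> M) : Rlinear f -> forall r x, f (r *: x) = r *: f x.
Proof. by move=> H r x; have := H r x 0; rewrite !addr0 lin0 // addr0. Qed.
Lemma linN (R : nzRingType) (M : lmodType R) (f : M -> M) : Rlinear f -> forall x, f (- x) = - f x.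
Proof. by move=> H x; rewrite -scaleN1r linZ // scaleN1r. Qed.
Lemma linB (R : nzRingType) (M : lmodType R) (f : M -> M) : Rlinear f -> forall x y, f (x - y) = f x - f y.
Proof. by move=> H x y; rewrite linD // linN. Qed.

Lemma subN (R : nzRingType) (M : lmodType R) (P : M -> Prop) : submod P -> forall x, P x -> P (- x).
Proof. by case=> _ _ HZ x Hx; rewrite -scaleN1r; apply: HZ. Qed.
Lemma subB (R : nzRingType) (M : lmodType R) (P : M -> Prop) : submod P -> forall x y, P x -> P y -> P (x - y).
Proof. move=> H x y Hx Hy; case: (H) => _ HD _; apply: HD => //; exact: subN. Qed.

Definition spn (R : nzRingType) (M : lmodType R) (n : nat) (v : nat -> M) (x : M) : Prop :=
  exists c : nat -> R, x = \sum_(l < n) c l *: v l.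

Lemma spn_snoc (R : nzRingType) (M : lmodType R) (n : nat) (v : nat -> M) a w r :
  spn n v a -> spn n.+1 (fun l => if l == n then w else v l) (a + r *: w).
Proof.
case=> c ->; exists (fun l => if l == n then r else c l).
rewrite big_ord_recr /= eqxx; congr (_ + _); apply: eq_bigr => i _.
by rewrite ltn_eqF.
Qed.

Lemma spn_le (R : nzRingType) (M : lmodType R) (n k : nat) (v : nat -> M) x :
  (n <= k)%N -> spn n v x -> spn k v x.
Proof.
move=> le [c ->]; exists (fun l => if (l < n)%N then c l else 0).
rewrite (big_ord_widen k (fun l => c l *: v l)) // big_mkcond /=.
by apply: eq_bigr => i _; case: ifP => //; rewrite scale0r.
Qed.

Lemma spn0 (R : nzRingType) (M : lmodType R) (n : nat) (v : nat -> M) : spn n v 0.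
Proof. by exists (fun _ => 0); rewrite big1 // => i _; rewrite scale0r. Qed.

Lemma spn_sub (R : nzRingType) (M : lmodType R) (n : nat) (v : nat -> M) (P : M -> Prop) :
  submod P -> (forall l, (l < n)%N -> P (v l)) -> forall x, spn n v x -> P x.
Proof.
move=> [H0 HD HZ] Hv x [c ->]; elim: n Hv => [|n IH] Hv; first by rewrite big_ord0.
rewrite big_ord_recr /=; apply: HD; first by apply: IH => l Hl; apply: Hv; lia.
by apply: HZ; apply: Hv.
Qed.


Lemma step_gen (R : nzRingType) (M : lmodType R) (A B : M -> Prop) (w : M) :
  submod A -> (forall x, A x -> B x) -> submod B ->
  (forall Q : M -> Prop, submod Q ->
     (forall x, A x -> Q x) -> (forall x, Q x -> B x) ->
     (forall x, Q x <-> A x) \/ (forall x, Q x <-> B x)) ->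
  B w -> ~ A w -> forall x, B x -> exists a r, A a /\ x = a + r *: w.
Proof.
move=> sA AB sB HS Bw nAw.
pose Q := fun x => exists a r, A a /\ x = a + r *: w.
have sQ : submod Q.
  case: sA => A0 AD AZ; split.
  - by exists 0, 0; rewrite scale0r addr0.
  - move=> x y [a [r [Aa ->]]] [b [s [Ab ->]]]; exists (a + b), (r + s); split; first exact: AD.
    by rewrite scalerDl addrACA.
  - move=> s x [a [r [Aa ->]]]; exists (s *: a), (s * r); split; first exact: AZ.
    by rewrite scalerDr scalerA.
case: (HS Q sQ).
- by move=> x Ax; exists x, 0; rewrite scale0r addr0.
- case: sB => _ BD BZ x [a [r [Aa ->]]]; apply: BD; first exact: AB.
  exact: BZ.
- move=> H; exfalso; apply: nAw; apply/H; exists 0, 1; split; first by case: sA.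
  by rewrite scale1r add0r.
- by move=> H x Bx; apply/H.
Qed.

Lemma series_mono (R : nzRingType) (M : lmodType R) (N : nat -> M -> Prop) (n : nat) :
  (forall i, (i < n)%N -> forall x, N i x -> N i.+1 x) ->
  forall i j, (i <= j)%N -> (j <= n)%N -> forall x, N i x -> N j x.
Proof.
move=> H i j; elim: j => [|j IH] ij jn x Nx.
  have E : i = 0%N by lia.
  by rewrite E in Nx.
case: (ltnP i j.+1) => ij'.
  apply: (H j). lia. apply: IH. lia. lia. exact Nx.
have E : i = j.+1 by lia.
by rewrite -E.
Qed.

Lemma comp_gen (R : nzRingType) (M : lmodType R) (P : M -> Prop) (n : nat) :
  comp_length P n -> exists y : nat -> M, forall x, P x -> spn n y x.
Proof.
case=> N [sN N0 Nn Hst].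
suff H : forall i, (i <= n)%N -> exists y : nat -> M, forall x, N i x -> spn i y x.
  have [y Hy] := H n (leqnn n).
  by exists y => x Px; apply: Hy; apply/Nn.
elim=> [|i IH] Hi.
  by exists (fun _ => 0) => x /N0 ->; apply: spn0.
case: (IH (ltnW Hi)) => y Hy.
case: (Hst i Hi) => Hsub [w [Nw nNw]] HS.
exists (fun l => if l == i then w else y l) => x Nx.
case: (step_gen (sN i) Hsub (sN i.+1) HS Nw nNw Nx) => a [r [Na ->]].
exact: spn_snoc (Hy _ Na).
Qed.


Definition cser (R : nzRingType) (M : lmodType R) (N : nat -> M -> Prop) (n : nat) :=
  (forall i, submod (N i)) /\
  forall i, (i < n)%N ->
          [/\ (forall x, N i x -> N i.+1 x),
              (exists x, N i.+1 x /\ ~ N i x) &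
              forall Q : M -> Prop, submod Q ->
                (forall x, N i x -> Q x) -> (forall x, Q x -> N i.+1 x) ->
                (forall x, Q x <-> N i x) \/ (forall x, Q x <-> N i.+1 x)].

Definition bad (R : nzRingType) (M : lmodType R) (N : nat -> M -> Prop) (X : M -> Prop) i :=
  ~ (forall x, N i.+1 x -> exists a b, N i a /\ X b /\ x = a + b).

Definition bv (R : nzRingType) (M : lmodType R) (N : nat -> M -> Prop) (X : M -> Prop) i : nat :=
  if excluded_middle_informative (bad N X i) then 1%N else 0%N.

Definition cnt (R : nzRingType) (M : lmodType R) (N : nat -> M -> Prop) (X : M -> Prop) n : nat :=
  (\sum_(0 <= i < n) bv N X i)%N.

Definition Sstep (R : nzRingType) (M : lmodType R) (X X' : M -> Prop) :=
  forall Q : M -> Prop, submod Q -> (forall x, X x -> Q x) -> (forall x, Q x -> X' x) ->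
    (forall x, Q x -> X x) \/ (forall x, X' x -> Q x).

Lemma bv_le1 (R : nzRingType) (M : lmodType R) N X i : (@bv R M N X i <= 1)%N.
Proof. by rewrite /bv; case: excluded_middle_informative. Qed.

Lemma sum_le (F G : nat -> nat) n : (forall i, (i < n)%N -> F i <= G i)%N ->
  (\sum_(0 <= i < n) F i <= \sum_(0 <= i < n) G i)%N.
Proof.
elim: n => [|n IH] H; first by rewrite !big_geq.
rewrite !big_nat_recr //=; apply: leq_add; first by apply: IH => i Hi; apply: H; lia.
exact: H.
Qed.

Lemma sum_const1 (F : nat -> nat) n : (forall i, (i < n)%N -> F i = 1%N) ->
  (\sum_(0 <= i < n) F i = n)%N.
Proof.
elim: n => [|n IH] H; first by rewrite big_geq.
rewrite big_nat_recr //= IH ?H //; first lia. by move=> i Hi; apply: H; lia.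
Qed.

Lemma cnt_ext (R : nzRingType) (M : lmodType R) N (X X' : M -> Prop) n :
  (forall x, X x <-> X' x) -> cnt N X n = cnt N X' n.
Proof.
move=> E; apply: eq_bigr => i _; rewrite /bv.
case: excluded_middle_informative => B; case: excluded_middle_informative => B' //.
- exfalso; apply: B => x Nx; have [a [b [Na [Xb ->]]]] := NNPP _ B' x Nx.
  by exists a, b; split => //; split => //; apply/E.
- exfalso; apply: B' => x Nx; have [a [b [Na [Xb ->]]]] := NNPP _ B x Nx.
  by exists a, b; split => //; split => //; apply/E.
Qed.

Lemma cnt_anti (R : nzRingType) (M : lmodType R) N (X X' : M -> Prop) n :
  (forall x, X x -> X' x) -> (cnt N X' n <= cnt N X n)%N.
Proof.
move=> E; apply: sum_le => i _; rewrite /bv.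
case: excluded_middle_informative => B; case: excluded_middle_informative => B' //.
exfalso; apply: B => x Nx; have [a [b [Na [Xb ->]]]] := NNPP _ B' x Nx.
by exists a, b; split => //; split => //; apply: E.
Qed.


Lemma two_idx (R : nzRingType) (M : lmodType R) N d (X X' : M -> Prop) i i' :
  cser N d -> submod X -> submod X' -> (forall x, X x -> X' x) -> Sstep X X' ->
  (i < i')%N -> (i' < d)%N -> bad N X i -> ~ bad N X' i -> bad N X i' -> ~ bad N X' i' -> False.
Proof.
move=> [sN Hst] sX sX' XX' SS ii' i'd b1 nb1 b2 nb2.
have mono := series_mono (fun i H => match Hst i H with And3 a _ _ => a end).
pose Q := fun x => X' x /\ exists a b, N i.+1 a /\ X b /\ x = a + b.
have sQ : submod Q.
  case: (sN i.+1) => A0 AD AZ; case: sX => X0 XD XZ; case: sX' => Y0 YD YZ; split.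
  - rewrite /Q; split; first exact: Y0.
    exists 0, 0; split; first exact: A0. split; first exact: X0. by rewrite addr0.
  - move=> x y [Yx [a [b [Na [Xb E]]]]] [Yy [a' [b' [Na' [Xb' E']]]]]; split; first exact: YD.
    exists (a + a'), (b + b'); split; first exact: AD. split; first exact: XD.
    by rewrite E E' addrACA.
  - move=> r x [Yx [a [b [Na [Xb E]]]]]; split; first exact: YZ.
    exists (r *: a), (r *: b); split; first exact: AZ. split; first exact: XZ.
    by rewrite E scalerDr.
case: (SS Q sQ).
- by move=> x Xx; split; [exact: XX' | exists 0, x; split; [case: (sN i.+1)|split=> //; rewrite add0r]].
- by move=> x [].
- move=> QX; apply: b1 => x Nx; have [a [b [Na [Xb E]]]] := NNPP _ nb1 x Nx.
  exists a, b; split => //; split => //; apply: QX; split => //.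
  exists (x - a), 0; split; first apply: subB => //; first apply: mono Na; try lia.
  split; first by case: sX. by rewrite E addr0 addrC addKr.
- move=> X'Q; apply: b2 => x Nx; have [a [b [Na [Xb E]]]] := NNPP _ nb2 x Nx.
  have [_ [a2 [b2' [Na2 [Xb2 E2]]]]] := X'Q b Xb.
  exists (a + a2), b2'; split; last split => //.
    case: (sN i') => _ AD _; apply: AD => //; apply: mono Na2; lia.
  by rewrite E E2 addrA.
Qed.

Lemma cnt_step (R : nzRingType) (M : lmodType R) N d (X X' : M -> Prop) :
  cser N d -> submod X -> submod X' -> (forall x, X x -> X' x) -> Sstep X X' ->
  (cnt N X d <= cnt N X' d + 1)%N.
Proof.
move=> cs sX sX' XX' SS.
suff H : forall n, (n <= d)%N -> (cnt N X n <= cnt N X' n)%N \/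
   ((cnt N X n <= cnt N X' n + 1)%N /\ exists i, (i < n)%N /\ bad N X i /\ ~ bad N X' i).
  case: (H d (leqnn d)) => [h|[h _]] //; lia.
elim=> [|n IH] Hn; first by left; rewrite /cnt !big_geq.
rewrite /cnt !big_nat_recr //=; rewrite -/(cnt N X n) -/(cnt N X' n).
have le1 := bv_le1 N X n; have le1' := bv_le1 N X' n.
case: (IH (ltnW Hn)) => [h|[h [i [Hi [bi nbi]]]]].
- case: (leqP (bv N X n) (bv N X' n)) => c; first by left; lia.
  right; split; first lia.
  exists n; split => //; move: c; rewrite /bv.
  by case: excluded_middle_informative => //; case: excluded_middle_informative.
- case: (leqP (bv N X n) (bv N X' n)) => c.
    right; split; first lia. by exists i; split => //; lia.
  exfalso; move: c; rewrite /bv.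
  case: excluded_middle_informative => //; case: excluded_middle_informative => // b1 b2 _.
  first [exact: (two_idx cs sX sX' XX' SS Hi Hn bi nbi b2 b1) | exact: (two_idx cs sX sX' XX' SS Hi Hn bi nbi b1 b2)].
Qed.

Lemma telescope (R : nzRingType) (M : lmodType R) N d (Z : nat -> M -> Prop) (w : nat -> nat) e :
  (forall i, (i < e)%N -> (cnt N (Z i) d <= cnt N (Z i.+1) d + w i)%N) ->
  (cnt N (Z 0%N) d <= cnt N (Z e) d + \sum_(0 <= i < e) w i)%N.
Proof.
elim: e => [|e IH] H; first by rewrite big_geq // addn0.
rewrite big_nat_recr //=.
have h1 := IH (fun i Hi => H i (ltnW Hi)); have h2 := H e (ltnSn e); lia.
Qed.


Lemma cnt_zero (R : nzRingType) (M : lmodType R) N d :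
  cser N d -> cnt N (fun x : M => x = 0) d = d.
Proof.
move=> [sN Hst]; apply: sum_const1 => i Hi; rewrite /bv.
case: excluded_middle_informative => // nb; exfalso; apply: nb => H.
case: (Hst i Hi) => _ [w [Nw nNw]] _; apply: nNw.
by have [a [b [Na [-> ->]]]] := H w Nw; rewrite addr0.
Qed.

Lemma cnt_top (R : nzRingType) (M : lmodType R) N d :
  cser N d -> cnt N (fun x : M => True) d = 0%N.
Proof.
move=> [sN Hst]; rewrite /cnt big1_seq // => i _; rewrite /bv.
case: excluded_middle_informative => // b; exfalso; apply: b => x _.
by exists 0, x; split; [case: (sN i) | split => //; rewrite add0r].
Qed.

Lemma cser_Sstep (R : nzRingType) (M : lmodType R) N d i :
  cser N d -> (i < d)%N -> @Sstep R M (N i) (N i.+1).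
Proof.
move=> [sN Hst] Hi Q sQ H1 H2; case: (Hst i Hi) => _ _ HS.
case: (HS Q sQ H1 H2) => E; [left | right] => x; move=> h; by apply E.
Qed.

Lemma cnt_img_le (R : nzRingType) (M : lmodType R) (phi : M -> M) N d K m :
  Rlinear phi -> cser N d -> (forall x, N 0%N x <-> x = 0) -> (forall x, N d x) ->
  cser K m -> (forall x, K 0%N x <-> x = 0) -> (forall x, K m x <-> phi x = 0) ->
  (cnt N (fun b => exists y, b = phi y) d <= m)%N.
Proof.
move=> lin csN N0 Nd csK K0 Km.
have [sN HstN] := csN; have [sK HstK] := csK.
have h1 : (cnt N (K 0%N) d <= cnt N (K m) d + \sum_(0 <= i < m) 1)%N.
  apply: (@telescope _ _ N d K (fun _ => 1%N)) => i Hi; apply: (cnt_step csN (sK i) (sK i.+1)).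
    by case: (HstK i Hi).
  exact: (cser_Sstep csK Hi).
have e1 : cnt N (K 0%N) d = d by rewrite (cnt_ext _ _ K0) cnt_zero.
have e2 : (\sum_(0 <= i < m) 1 = m)%N by apply: sum_const1.
pose Y := fun i x => N i (phi x).
have sY : forall i, submod (Y i).
  move=> i; case: (sN i) => A0 AD AZ; split; rewrite /Y.
  - by rewrite lin0.
  - by move=> x y Hx Hy; rewrite (linD lin); apply: AD.
  - by move=> r x Hx; rewrite (linZ lin); apply: AZ.
have e3 : cnt N (K m) d = cnt N (Y 0%N) d.
  by apply: cnt_ext => x; rewrite Km /Y N0.
have e4 : cnt N (Y d) d = 0%N.
  rewrite -(cnt_top csN); apply: cnt_ext => x; split => // _; exact: Nd.
pose strict := fun i => ~ (forall y, N i.+1 (phi y) -> N i (phi y)).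
pose sv := fun i => if excluded_middle_informative (strict i) then 1%N else 0%N.
have h2 : (cnt N (Y 0%N) d <= cnt N (Y d) d + \sum_(0 <= i < d) sv i)%N.
  apply: (@telescope _ _ N d Y sv) => i Hi; rewrite /sv; case: excluded_middle_informative => st.
  - apply: (cnt_step csN (sY i) (sY i.+1)).
      by move=> x; rewrite /Y; case: (HstN i Hi) => H _ _; apply: H.
    move=> Q sQ H1 H2.
    pose P := fun x => exists n q, N i n /\ Q q /\ x = n + phi q.
    have sP : submod P.
      case: (sN i) => A0 AD AZ; case: sQ => Q0 QD QZ; split.
      - by exists 0, 0; split => //; split => //; rewrite (lin0 lin) addr0.
      - move=> x y [n [q [Nn [Qq ->]]]] [n' [q' [Nn' [Qq' ->]]]].
        exists (n + n'), (q + q'); split; first exact: AD. split; first exact: QD.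
        by rewrite (linD lin) addrACA.
      - move=> r x [n [q [Nn [Qq ->]]]]; exists (r *: n), (r *: q).
        split; first exact: AZ. split; first exact: QZ.
        by rewrite (linZ lin) scalerDr.
    case: (HstN i Hi) => Hinc _ HS.
    case: (HS P sP).
    + by move=> x Nx; exists x, 0; split => //; split; [case: sQ|rewrite (lin0 lin) addr0].
    + move=> x [n [q [Nn [Qq ->]]]]; case: (sN i.+1) => _ AD _; apply: AD; first exact: Hinc.
      exact: H2.
    + move=> E; left => q Qq; rewrite /Y; apply/E; exists 0, q; split; first by case: (sN i).
      by split => //; rewrite add0r.
    + move=> E; right => y Yy; have [n [q [Nn [Qq Eq]]]] := (proj2 (E (phi y))) Yy.
      have Yyq : Y i (y - q) by rewrite /Y (linB lin) Eq addrK.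
      have := H1 _ Yyq; case: sQ => _ QD _ => Hq.
      by have := QD _ _ Hq Qq; rewrite subrK.
  - rewrite addn0; apply: cnt_anti => x; rewrite /Y; exact: (NNPP _ st).
have h3 : (\sum_(0 <= i < d) sv i + cnt N (fun b => exists y, b = phi y) d <= d)%N.
  rewrite /cnt -big_split /=.
  rewrite -[X in (_ <= X)%N](@sum_const1 (fun _ => 1%N) d) //.
  apply: sum_le => i Hi; rewrite /sv /bv.
  case: excluded_middle_informative => st; case: excluded_middle_informative => b //.
  exfalso; apply: b.
  have [y [Ny nNy]] : exists y, N i.+1 (phi y) /\ ~ N i (phi y).
    apply: NNPP => H; apply: st => y Ny; apply: NNPP => nNy; apply: H; by exists y.
  case: (HstN i Hi) => Hinc _ HS.
  move=> x Nx; have [a [r [Na ->]]] := step_gen (sN i) Hinc (sN i.+1) HS Ny nNy Nx.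
  by exists a, (r *: phi y); split => //; split => //; exists (r *: y); rewrite linZ.
lia.
Qed.


Lemma gen_mod_img (R : nzRingType) (M : lmodType R) (phi : M -> M) N d :
  Rlinear phi -> cser N d -> (forall x, N 0%N x <-> x = 0) ->
  forall i, (i <= d)%N -> exists u : nat -> M, forall x, N i x ->
    exists s y, spn (cnt N (fun b => exists y, b = phi y) i) u s /\ x = s + phi y.
Proof.
move=> lin [sN Hst] N0; elim=> [|i IH] Hi.
  exists (fun _ => 0) => x /N0 ->; exists 0, 0; split; first exact: spn0.
  by rewrite (lin0 lin) addr0.
have [u Hu] := IH (ltnW Hi).
case: (Hst i Hi) => Hinc _ HS.
rewrite /cnt big_nat_recr //= -/(cnt _ _ i).
rewrite /bv; case: excluded_middle_informative => b.
- have [w [Nw nw]] : exists w, N i.+1 w /\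
      ~ exists a b, N i a /\ (exists y, b = phi y) /\ w = a + b.
    apply: NNPP => H; apply: b => x Nx; apply: NNPP => H2; apply: H; by exists x.
  have nNw : ~ N i w.
    move=> Nw'; apply: nw; exists w, 0; split => //; split; last by rewrite addr0.
    by exists 0; rewrite (lin0 lin).
  exists (fun l => if l == cnt N (fun b => exists y, b = phi y) i then w else u l) => x Nx.
  have [a [r [Na ->]]] := step_gen (sN i) Hinc (sN i.+1) HS Nw nNw Nx.
  have [s [y [Hs ->]]] := Hu a Na.
  exists (s + r *: w), y; split; last by rewrite addrAC.
  by rewrite addn1; apply: spn_snoc.
- exists u => x Nx; have [a [c [Na [[y1 ->] ->]]]] := NNPP _ b x Nx.
  have [s [y2 [Hs ->]]] := Hu a Na.
  exists s, (y2 + y1); split; first by rewrite addn0.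
  by rewrite (linD lin) addrA.
Qed.

Lemma uniq_cent (R : nzRingType) (M : lmodType R) (phi : M -> M) (u : nat -> M) m
  (psi1 psi2 : M -> M) :
  Rlinear phi -> nilpotent_map phi ->
  (forall x, exists s y, spn m u s /\ x = s + phi y) ->
  centralizer phi psi1 -> centralizer phi psi2 ->
  (forall j, (j < m)%N -> psi1 (u j) = psi2 (u j)) -> forall x, psi1 x = psi2 x.
Proof.
move=> lin [k Hk] Hgen [l1 c1] [l2 c2] E.
pose D := fun x => psi1 x - psi2 x.
have lD : Rlinear D.
  move=> r x y; rewrite /D (l1 r x y) (l2 r x y) scalerBr.
  by rewrite opprD addrACA.
have cD : forall x, D (phi x) = phi (D x) by move=> x; rewrite /D c1 c2 (linB lin).
have sZ : submod (fun x => D x = 0).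
  split; first exact: lin0.
  - by move=> x y Hx Hy; rewrite (linD lD) Hx Hy addr0.
  - by move=> r x Hx; rewrite (linZ lD) Hx scaler0.
have Dspan : forall s, spn m u s -> D s = 0.
  apply: (spn_sub sZ) => j Hj; by rewrite /D E // subrr.
suff H : forall j, (j <= k)%N -> forall x, iter (k - j)%N phi (D x) = 0.
  move=> x; apply/eqP; rewrite -subr_eq0; apply/eqP.
  by have := H k (leqnn k) x; rewrite subnn.
elim=> [|j IH] Hj x; first by rewrite subn0.
have [s [y [Hs ->]]] := Hgen x.
rewrite (linD lD) Dspan // add0r cD.
rewrite -iterSr.
have -> : ((k - j.+1).+1 = k - j)%N by lia.
exact: IH (ltnW Hj) y.
Qed.


Definition gX (R : nzRingType) (m : nat) (k : nat) : 'M[{poly R}]_m := ('X^k)%:M.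

Definition readA (R : nzRingType) (m d : nat) (A : 'M[{poly R}]_m) (j : 'I_m) (l : nat) : R :=
  (A j j)`_(j * d + l)%N.

Lemma readD (R : nzRingType) m d (A B : 'M[{poly R}]_m) j l :
  readA d (A + B) j l = readA d A j l + readA d B j l.
Proof. by rewrite /readA mxE coefD. Qed.

Lemma readZ (R : nzRingType) m d (A : 'M[{poly R}]_m) z j l :
  readA d (matscale z A) j l = z * readA d A j l.
Proof. by rewrite /readA /matscale mxE coefCM. Qed.

Lemma read0 (R : nzRingType) m d j l : readA d (0 : 'M[{poly R}]_m) j l = 0.
Proof. by rewrite /readA mxE coef0. Qed.

Lemma entry_sum (R : nzRingType) m n (C : nat -> R) (j : 'I_m) :
  (\sum_(k < n) matscale (C k) (gX R m k)) j j = \poly_(k < n) C k.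
Proof.
rewrite summxE poly_def; apply: eq_bigr => k _.
by rewrite /matscale /gX mxE mxE eqxx mulr1n mul_polyC.
Qed.

Lemma Rspan0 (R : nzRingType) m k (g : 'I_k -> 'M[{poly R}]_m) : Rspan g 0.
Proof.
exists (fun _ => 0); rewrite big1 // => i _.
by rewrite /matscale scale0r.
Qed.

Lemma RspanD (R : nzRingType) m k (g : 'I_k -> 'M[{poly R}]_m) A B :
  Rspan g A -> Rspan g B -> Rspan g (A + B).
Proof.
move=> [c ->] [c' ->]; exists (fun i => c i + c' i); rewrite -big_split /=.
by apply: eq_bigr => i _; rewrite /matscale polyCD scalerDl.
Qed.

Lemma RspanZ (R : nzRingType) m k (g : 'I_k -> 'M[{poly R}]_m) z A :
  Rspan g A -> Rspan g (matscale z A).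
Proof.
move=> [c ->]; exists (fun i => z * c i); rewrite /matscale scaler_sumr.
by apply: eq_bigr => i _; rewrite scalerA polyCM.
Qed.

Lemma cent0 (R : nzRingType) (M : lmodType R) (phi : M -> M) :
  Rlinear phi -> centralizer phi (fun _ => 0).
Proof. by move=> lin; split; [move=> r x y; rewrite scaler0 addr0 | move=> x; rewrite (lin0 lin)]. Qed.

Lemma centD (R : nzRingType) (M : lmodType R) (phi : M -> M) p q :
  Rlinear phi -> centralizer phi p -> centralizer phi q ->
  centralizer phi (fun x => p x + q x).
Proof.
move=> lin [lp cp] [lq cq]; split.
  by move=> r x y; rewrite (lp r x y) (lq r x y) scalerDr addrACA.
by move=> x; rewrite cp cq (linD lin).
Qed.

Lemma centZ (R : nzRingType) (M : lmodType R) (phi : M -> M) p z :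
  Rlinear phi -> central z -> centralizer phi p ->
  centralizer phi (fun x => z *: p x).
Proof.
move=> lin cz [lp cp]; split.
  by move=> r x y; rewrite (lp r x y) scalerDr !scalerA cz.
by move=> x; rewrite cp (linZ lin).
Qed.

Unset Implicit Arguments.

Theorem theorem4p6 (R : nzRingType) (M : lmodType R) (phi : M -> M)
  (d m : nat) :
  fin_gen M -> semisimple M ->
  Rlinear phi -> nilpotent_map phi ->
  comp_length (fun _ : M => True) d ->
  comp_length (fun x : M => phi x = 0) m ->
  exists (g : 'I_(m * d)%N -> 'M[{poly R}]_m)
         (L' : 'M[{poly R}]_m -> Prop)
         (f : 'M[{poly R}]_m -> (M -> M)),
    (forall A, L' A -> Rspan g A) /\
    Zsubmod L' /\
    (forall A B, L' A -> L' B -> forall x, f (A + B) x = f A x + f B x) /\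
    (forall z A, central z -> L' A -> forall x, f (matscale z A) x = z *: f A x) /\
    (forall A, L' A -> centralizer phi (f A)) /\
    (forall psi, centralizer phi psi -> exists A, L' A /\ f A = psi).
Proof.
move=> _ _ lin nil cM cK.
have [y Hy] := comp_gen cM.
case: cM => N [sN N0 Nd HstN]; have csN : cser N d := conj sN HstN.
case: cK => K [sK K0 Km HstK]; have csK : cser K m := conj sK HstK.
have hc := cnt_img_le lin csN N0 (fun x => proj2 (Nd x) I) csK K0 Km.
have [u Hu] := gen_mod_img lin csN N0 (leqnn d).
have Hgen : forall x, exists s y, spn m u s /\ x = s + phi y.
  move=> x; have [s [y' [Hs E]]] := Hu x (proj2 (Nd x) I).
  by exists s, y'; split => //; exact: spn_le hc Hs.
pose g := fun k : 'I_(m * d) => gX R m k.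
pose matches := fun (A : 'M[{poly R}]_m) (p : M -> M) =>
  forall j : 'I_m, p (u j) = \sum_(l < d) readA d A j l *: y l.
pose L' := fun A => Rspan g A /\ exists p, centralizer phi p /\ matches A p.
pose f := fun A => epsilon (inhabits (fun _ : M => (0 : M)))
                     (fun p => centralizer phi p /\ matches A p).
have fspec : forall A, L' A -> centralizer phi (f A) /\ matches A (f A).
  move=> A [_ H]; exact: (epsilon_spec _ _ H).
have uniq : forall A p, L' A -> centralizer phi p -> matches A p -> forall x, f A x = p x.
  move=> A p LA cp mp; have [cf mf] := fspec A LA.
  apply: (uniq_cent lin nil Hgen cf cp) => j Hj.
  by have := mf (Ordinal Hj); have := mp (Ordinal Hj); move=> /= -> ->.
have matchD : forall A B p q, matches A p -> matches B q ->
    matches (A + B) (fun x => p x + q x).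
  move=> A B p q mp mq j; rewrite mp mq -big_split /=.
  by apply: eq_bigr => l _; rewrite readD scalerDl.
have matchZ : forall A p z, matches A p -> matches (matscale z A) (fun x => z *: p x).
  move=> A p z mp j; rewrite mp scaler_sumr.
  by apply: eq_bigr => l _; rewrite readZ scalerA.
have L'D : forall A B, L' A -> L' B -> L' (A + B).
  move=> A B [sA [p [cp mp]]] [sB [q [cq mq]]]; split; first exact: RspanD.
  by exists (fun x => p x + q x); split; [exact: centD | exact: matchD].
have L'Z : forall z A, central z -> L' A -> L' (matscale z A).
  move=> z A cz [sA [p [cp mp]]]; split; first exact: RspanZ.
  by exists (fun x => z *: p x); split; [exact: centZ | exact: matchZ].
exists g, L', f.
split; first by move=> A [].
split.
  split.
  - split; first exact: Rspan0. exists (fun _ => 0); split; first exact: cent0.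
    by move=> j; rewrite big1 // => l _; rewrite read0 scale0r.
  - exact: L'D.
  - exact: L'Z.
split.
  move=> A B LA LB x; have [cA mA] := fspec A LA; have [cB mB] := fspec B LB.
  exact: (uniq (A + B) _ (L'D _ _ LA LB) (centD lin cA cB) (matchD _ _ _ _ mA mB)).
split.
  move=> z A cz LA x; have [cA mA] := fspec A LA.
  exact: (uniq _ _ (L'Z _ _ cz LA) (centZ lin cz cA) (matchZ _ _ z mA)).
split; first by move=> A LA; case: (fspec A LA).
move=> psi cpsi.
have [C HC] : exists C : nat -> nat -> R,
    forall j, psi (u j) = \sum_(l < d) C j l *: y l.
  exists (fun j => proj1_sig (constructive_indefinite_description _ (Hy (psi (u j)) I))).
  move=> j; exact: (proj2_sig (constructive_indefinite_description _ (Hy (psi (u j)) I))).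
pose K' := fun k : nat => C (k %/ d)%N (k %% d)%N.
pose A := \sum_(k < m * d) matscale (K' k) (g k).
have mA : matches A psi.
  move=> j; rewrite HC; apply: eq_bigr => l _.
  rewrite /readA /A /g entry_sum coef_poly.
  have lt : (j * d + l < m * d)%N by have := ltn_ord j; have := ltn_ord l; nia.
  rewrite lt /K' divnMDl; last by have := ltn_ord l; lia.
  by rewrite divn_small // addn0 modnMDl modn_small.
have LA : L' A by split; [exists (fun k => K' k) | exists psi].
exists A; split => //; apply: functional_extensionality => x; exact: uniq.
Qed.
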